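(* Suppose Assumption 1 holds with $\alpha\in(0,1]$ and let $(f_t)_{t\in\mathbb N}$ be the online gradient descent iterates with step sizes satisfying $\eta_t\le\frac{1}{A\kappa^2}$ for all $t\in\mathbb N$. Set $\eta_0:=1$ and $$C_1=\|f_H\|^2+A^{-1}B+2\max\Big\{\sup_{y\in\mathcal Y}\phi(y,0),\ \sup_{(x,y)\in\mathcal Z}\phi(y,f_H(x))\Big\}.$$ Then for every $t\in\mathbb N$ and every realization of $z_1,z_2,\dots$, $$\|f_{t+1}-f_H\|^2\le C_1\sum_{k=0}^t\eta_k\qquad\text{and}\qquad\|f_{t+1}\|^2\le C_1\sum_{k=1}^t\eta_k.$$ If moreover $\eta_{t+1}\le\eta_t$ for all $t\in\mathbb N$, then for every $t\in\mathbb N$, $$\sum_{k=1}^t\eta_k^2\,\phi(y_k,f_k(x_k))\le\eta_1\|f_H\|^2+C_2\sum_{k=1}^t\eta_k^2,\qquad C_2=2\sup_{(x,y)\in\mathcal Z}\phi(y,f_H(x))+\eta_1\kappa^2B.$$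
   Context: Setting: Let $\mathcal X\subset\mathbb R^d$, $\mathcal Y\subset\mathbb R$, $\mathcal Z=\mathcal X\times\mathcal Y$, and let $\rho$ be a Borel probability measure on $\mathcal Z$. Let $K:\mathcal X\times\mathcal X\to\mathbb R$ be a continuous, symmetric, positive semi-definite kernel with reproducing kernel Hilbert space $H_K$ (inner product $\langle\cdot,\cdot\rangle$, norm $\|\cdot\|$), $K_x:=K(x,\cdot)$, reproducing property $f(x)=\langle f,K_x\rangle$, and $\kappa:=\sup_{x\in\mathcal X}\sqrt{K(x,x)}<\infty$. Let $\phi:\mathcal Y\times\mathbb R\to[0,\infty)$ be a loss function, differentiable in its second argument, and write $\phi'(y,s)$ for its derivative with respect to $s$. The generalization error of $f:\mathcal X\to\mathbb R$ is $\mathcal E(f)=\int_{\mathcal Z}\phi(y,f(x))\,d\rho(x,y)$. It is assumed that a minimizer $f_H\in\arg\min_{f\in H_K}\mathcal E(f)$ exists and that $\max\{\sup_{y\in\mathcal Y}\phi(y,0),\ \sup_{(x,y)\in\mathcal Z}\phi(y,f_H(x))\}<\infty$. Let $z_t=(x_t,y_t)$, $t\in\mathbb N$, be i.i.d. samples from $\rho$, let $(\eta_t)_{t\in\mathbb N}$ be positive step sizes, and define the online gradient descent iterates by $f_1=0$ and $f_{t+1}=f_t-\eta_t\phi'(y_t,f_t(x_t))K_{x_t}$ for $t\in\mathbb N$ (so $f_t$ depends only on $z_1,\dots,z_{t-1}$). Assumption 1: for every $y\in\mathcal Y$, $\phi(y,\cdot)$ is convex and differentiable, and there are constants $\alpha\in(0,1]$,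 $L>0$ with $|\phi'(y,s)-\phi'(y,\tilde s)|\le L|s-\tilde s|^{\alpha}$ for all $s,\tilde s\in\mathbb R$, $y\in\mathcal Y$. Constants: $A=2\alpha^{\frac{1-\alpha}{1+\alpha}}L^{\frac{2}{1+\alpha}}(1+\alpha)$ and $B=\alpha^{-\frac{2\alpha}{1+\alpha}}L^{\frac{2}{1+\alpha}}(1-\alpha^2)$. *)

(* Defs.v *)
From Stdlib Require Import Reals Lra.
Open Scope R_scope.

Record Hilbert := {
  car :> Type;
  hzero : car;
  hadd : car -> car -> car;
  hopp : car -> car;
  hscal : R -> car -> car;
  hinner : car -> car -> R;
  hadd_assoc : forall u v w, hadd u (hadd v w) = hadd (hadd u v) w;
  hadd_comm : forall u v, hadd u v = hadd v u;
  hadd_0 : forall u, hadd hzero u = u;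
  hadd_opp : forall u, hadd (hopp u) u = hzero;
  hscal_assoc : forall a b u, hscal a (hscal b u) = hscal (a * b) u;
  hscal_1 : forall u, hscal 1 u = u;
  hscal_addr : forall a u v, hscal a (hadd u v) = hadd (hscal a u) (hscal a v);
  hscal_addl : forall a b u, hscal (a + b) u = hadd (hscal a u) (hscal b u);
  hinner_sym : forall u v, hinner u v = hinner v u;
  hinner_addl : forall u v w, hinner (hadd u v) w = hinner u w + hinner v w;
  hinner_scall : forall a u v, hinner (hscal a u) v = a * hinner u v;
  hinner_pos : forall u, 0 <= hinner u u;
  hinner_def : forall u, hinner u u = 0 -> u = hzero;
  hcomplete : forall u : nat -> car,
    (forall eps, 0 < eps -> exists N, forall m n, (N <= m)%nat -> (N <= n)%nat ->
        sqrt (hinner (hadd (u m) (hopp (u n))) (hadd (u m) (hopp (u n)))) < eps) ->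
    exists l, forall eps, 0 < eps -> exists N, forall n, (N <= n)%nat ->
        sqrt (hinner (hadd (u n) (hopp l)) (hadd (u n) (hopp l))) < eps
}.

Arguments hzero {h}.
Arguments hadd {h}.
Arguments hopp {h}.
Arguments hscal {h}.
Arguments hinner {h}.

Definition hsub {H : Hilbert} (u v : H) : H := hadd u (hopp v).
Definition nsq {H : Hilbert} (u : H) : R := hinner u u.

(** Points of R^d are represented as functions nat -> R (only the first d
    coordinates matter); Euclidean distance on R^d. *)
Fixpoint sumsq (d : nat) (u : nat -> R) : R :=
  match d with O => 0 | S n => sumsq n u + (u n) ^ 2 end.
Definition dist_d (d : nat) (x x' : nat -> R) : R :=
  sqrt (sumsq d (fun i => x i - x' i)).

(** |s|^a with the convention 0^a = 0 (a > 0). *)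
Definition hpow (s a : R) : R := if Req_EM_T s 0 then 0 else Rpower s a.

Definition constA (alpha L : R) : R :=
  2 * Rpower alpha ((1 - alpha) / (1 + alpha)) * Rpower L (2 / (1 + alpha)) * (1 + alpha).
Definition constB (alpha L : R) : R :=
  Rpower alpha (- (2 * alpha) / (1 + alpha)) * Rpower L (2 / (1 + alpha)) * (1 - alpha ^ 2).

(** Online gradient descent: ogd_aux n = f_{n+1}. *)
Fixpoint ogd_aux {H : Hilbert} (Kx : (nat -> R) -> H) (dphi : R -> R -> R)
  (eta : nat -> R) (xs : nat -> (nat -> R)) (ys : nat -> R) (n : nat) : H :=
  match n with
  | O => hzero
  | S m => let f := ogd_aux Kx dphi eta xs ys m in
      hsub f (hscal (eta (S m) * dphi (ys (S m)) (hinner f (Kx (xs (S m))))) (Kx (xs (S m))))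
  end.
(** f_t for t >= 1 (f_1 = 0, f_{t+1} = f_t - eta_t phi'(y_t, f_t(x_t)) K_{x_t}). *)
Definition ogd {H : Hilbert} Kx dphi eta xs ys (t : nat) : H :=
  ogd_aux (H:=H) Kx dphi eta xs ys (pred t).

Fixpoint sum1 (a : nat -> R) (t : nat) : R :=
  match t with O => 0 | S n => sum1 a n + a (S n) end.
Definition sum0 (a : nat -> R) (t : nat) : R := a O + sum1 a t.

Definition eta0 (eta : nat -> R) (k : nat) : R := match k with O => 1 | _ => eta k end.

(* Main.v *)
Require Import Defs.
From Stdlib Require Import Reals.
Open Scope R_scope.
From Stdlib Require Import Lra Psatz Lia.


Lemma amgm p X Y : 0 < p < 1 -> 0 < X -> 0 < Y ->
  exp (p * ln X + (1 - p) * ln Y) <= p * X + (1 - p) * Y.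
Proof.
  intros Hp HX HY. set (m := p * ln X + (1 - p) * ln Y).
  assert (E1 : X = exp m * exp (ln X - m)) by (rewrite <- exp_plus; replace (m + (ln X - m)) with (ln X) by ring; rewrite exp_ln; lra).
  assert (E2 : Y = exp m * exp (ln Y - m)) by (rewrite <- exp_plus; replace (m + (ln Y - m)) with (ln Y) by ring; rewrite exp_ln; lra).
  pose proof (exp_ineq1_le (ln X - m)). pose proof (exp_ineq1_le (ln Y - m)).
  pose proof (exp_pos m).
  assert (exp m * (1 + (ln X - m)) <= exp m * exp (ln X - m)) by (apply Rmult_le_compat_l; lra). rewrite <- E1 in H2.
  assert (exp m * (1 + (ln Y - m)) <= exp m * exp (ln Y - m)) by (apply Rmult_le_compat_l; lra). rewrite <- E2 in H3.
  assert (p * (exp m * (1 + (ln X - m))) + (1-p) * (exp m * (1 + (ln Y - m))) = exp m)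
    by (unfold m; ring).
  nra.
Qed.

Lemma Rpower_pos x y : 0 < Rpower x y.
Proof. unfold Rpower; apply exp_pos. Qed.

Lemma constA_pos a L : 0 < a -> 0 < constA a L.
Proof.
  intros Ha. unfold constA. pose proof (Rpower_pos a ((1 - a) / (1 + a))).
  pose proof (Rpower_pos L (2 / (1 + a))).
  apply Rmult_lt_0_compat; [|lra]. apply Rmult_lt_0_compat; [|lra]. lra.
Qed.

Lemma constB_nonneg a L : 0 < a <= 1 -> 0 <= constB a L.
Proof.
  intros Ha. unfold constB. pose proof (Rpower_pos a (- (2 * a) / (1 + a))).
  pose proof (Rpower_pos L (2 / (1 + a))).
  apply Rmult_le_pos; [nra|nra].
Qed.

Lemma ln_constA a L : 0 < a -> 0 < L -> ln (constA a L) =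
  ln 2 + ((1 - a) / (1 + a)) * ln a + (2 / (1 + a)) * ln L + ln (1 + a).
Proof.
  intros Ha HL. unfold constA. pose proof (Rpower_pos a ((1 - a) / (1 + a))).
  pose proof (Rpower_pos L (2 / (1 + a))).
  rewrite !ln_mult; try lra; try (apply Rmult_lt_0_compat; try lra);
   try (apply Rmult_lt_0_compat; try lra).
  unfold Rpower. rewrite !ln_exp. ring.
Qed.

Lemma ln_constB a L : 0 < a < 1 -> 0 < L -> ln (constB a L) =
  (- (2 * a) / (1 + a)) * ln a + (2 / (1 + a)) * ln L + ln (1 - a) + ln (1 + a).
Proof.
  intros Ha HL. unfold constB. pose proof (Rpower_pos a (- (2 * a) / (1 + a))).
  pose proof (Rpower_pos L (2 / (1 + a))).
  replace (1 - a ^ 2) with ((1 - a) * (1 + a)) by ring.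
  rewrite !ln_mult; try lra; try (apply Rmult_lt_0_compat; try lra);
   try (apply Rmult_lt_0_compat; try lra).
  unfold Rpower. rewrite !ln_exp. ring.
Qed.

Lemma key_ineq a L r : 0 < a <= 1 -> 0 < L -> 0 < r ->
  constA a L * L * (r * Rpower r a) <= constA a L ^ 2 * r ^ 2 / 4 + constB a L.
Proof.
  intros Ha HL Hr. pose proof (constA_pos a L (proj1 Ha)) as HA.
  set (A := constA a L) in *. set (B := constB a L).
  destruct (Req_dec a 1) as [E|Hne].
  - subst a. assert (B = 0) by (unfold B, constB; ring).
    assert (A = 4 * L). { unfold A, constA. replace ((1-1)/(1+1)) with 0 by field.
      replace (2/(1+1)) with 1 by field. rewrite Rpower_O, Rpower_1 by lra. ring. }
    rewrite Rpower_1 by lra. rewrite H, H0. nra.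
  - assert (Ha' : 0 < a < 1) by lra.
    assert (HB : 0 < B). { unfold B, constB. pose proof (Rpower_pos a (- (2 * a) / (1 + a))).
      pose proof (Rpower_pos L (2 / (1 + a))).
      apply Rmult_lt_0_compat; [|nra]. apply Rmult_lt_0_compat; lra. }
    assert (DA : A = constA a L) by reflexivity. assert (DB : B = constB a L) by reflexivity.
    clearbody A B.
    set (p := (1 + a) / 2).
    set (X := A * A * r * r * / (2 * (1 + a))).
    set (Y := 2 * B * / (1 - a)).
    assert (HX : 0 < X). { unfold X. repeat apply Rmult_lt_0_compat; try lra.
      apply Rinv_0_lt_compat; lra. }
    assert (HY : 0 < Y). { unfold Y. repeat apply Rmult_lt_0_compat; try lra.
      apply Rinv_0_lt_compat; lra. }
    assert (Eq1 : p * X + (1 - p) * Y = A ^ 2 * r ^ 2 / 4 + B)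
      by (unfold p, X, Y; field; lra).
    rewrite <- Eq1.
    assert (Eq2 : A * L * (r * Rpower r a) = exp (p * ln X + (1 - p) * ln Y)).
    { rewrite <- (exp_ln (A * L * (r * Rpower r a))).
      2:{ pose proof (Rpower_pos r a). repeat apply Rmult_lt_0_compat; lra. }
      f_equal.
      pose proof (Rpower_pos r a).
      rewrite !ln_mult; try lra; try (repeat apply Rmult_lt_0_compat; lra).
      unfold X, Y.
      rewrite !ln_mult; try lra; try (repeat apply Rmult_lt_0_compat; lra);
        try (apply Rinv_0_lt_compat; lra).
      rewrite !ln_Rinv by lra.
      try rewrite ln_mult by lra. try rewrite ln_mult by lra.
      unfold Rpower at 1. rewrite ln_exp.
      rewrite DA, DB, ln_constA, ln_constB by lra.
      unfold p. field. lra. }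
    rewrite Eq2. apply amgm; unfold p; lra.
Qed.

Lemma hpow_le u r a : 0 < a -> 0 <= u <= r -> 0 < r -> hpow u a <= Rpower r a.
Proof.
  intros Ha Hu Hr. unfold hpow. destruct (Req_EM_T u 0).
  - left; apply Rpower_pos.
  - apply Rle_Rpower_l; lra.
Qed.

Lemma selfbound (g g' : R -> R) a L : 0 < a <= 1 -> 0 < L ->
  (forall s, 0 <= g s) -> (forall s, derivable_pt_lim g s (g' s)) ->
  (forall s s', Rabs (g' s - g' s') <= L * hpow (Rabs (s - s')) a) ->
  forall s, (g' s) ^ 2 <= constA a L * g s + constB a L.
Proof.
  intros Ha HL gnn gd gh s.
  pose proof (constA_pos a L (proj1 Ha)) as HA. pose proof (constB_nonneg a L Ha) as HB.
  set (A := constA a L) in *. set (B := constB a L) in *.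
  destruct (Req_dec (g' s) 0) as [E|Hne].
  { rewrite E. pose proof (gnn s). nra. }
  set (G := Rabs (g' s)).
  assert (HG : 0 < G) by (unfold G; apply Rabs_pos_lt; auto).
  set (r := 2 * G / A).
  assert (Hr : 0 < r) by (unfold r; apply Rmult_lt_0_compat; [lra| apply Rinv_0_lt_compat; lra]).
  pose proof (Rpower_pos r a) as HP.
  assert (Desc : 0 <= g s - G * r + L * r * Rpower r a).
  { destruct (Rle_lt_dec 0 (g' s)) as [Hp|Hn].
    - assert (G = g' s) by (unfold G; rewrite Rabs_right; lra).
      destruct (MVT_cor2 g g' (s - r) s) as [c [Hc1 Hc2]]; [lra| intros; apply gd|].
      pose proof (gh c s). rewrite (Rabs_minus_sym c s) in H0.
      pose proof (hpow_le (Rabs (s - c)) r a (proj1 Ha)) as Hh.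
      rewrite Rabs_right in Hh by lra. specialize (Hh ltac:(lra) Hr).
      rewrite (Rabs_right (s - c)) in H0 by lra.
      pose proof (gnn (s - r)).
      assert (g' c >= g' s - L * Rpower r a).
      { destruct (Rle_dec (g' s) (g' c)). { pose proof (Rpower_pos r a). nra. }
        rewrite Rabs_left1 in H0 by lra. nra. }
      replace (s - (s - r)) with r in Hc1 by ring. nra.
    - assert (G = - g' s) by (unfold G; rewrite Rabs_left; lra).
      destruct (MVT_cor2 g g' s (s + r)) as [c [Hc1 Hc2]]; [lra| intros; apply gd|].
      pose proof (gh c s).
      pose proof (hpow_le (Rabs (c - s)) r a (proj1 Ha)) as Hh.
      rewrite Rabs_right in Hh by lra. specialize (Hh ltac:(lra) Hr).
      rewrite (Rabs_right (c - s)) in H0 by lra.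
      pose proof (gnn (s + r)).
      assert (g' c <= g' s + L * Rpower r a).
      { destruct (Rle_dec (g' c) (g' s)). { pose proof (Rpower_pos r a). nra. }
        rewrite Rabs_right in H0 by lra. nra. }
      replace (s + r - s) with r in Hc1 by ring. nra. }
  pose proof (key_ineq a L r Ha HL Hr) as K. fold A B in K.
  assert (E1 : A * (G * r) = 2 * G ^ 2) by (unfold r; field; lra).
  assert (E2 : A ^ 2 * r ^ 2 / 4 = G ^ 2) by (unfold r; field; lra).
  assert (E3 : (g' s) ^ 2 = G ^ 2) by (unfold G; rewrite pow2_abs; ring).
  assert (0 <= A * (g s - G * r + L * r * Rpower r a)) by (apply Rmult_le_pos; lra).
  nra.
Qed.

Lemma conv_grad (g : R -> R) g's s s' : derivable_pt_lim g s g's ->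
  (forall u v l, 0 <= l <= 1 -> g (l * u + (1 - l) * v) <= l * g u + (1 - l) * g v) ->
  g s + g's * (s' - s) <= g s'.
Proof.
  intros Hd Hc. set (d := s' - s).
  destruct (Req_dec d 0) as [E|Hne].
  { rewrite E. replace s' with s by (unfold d in E; lra). lra. }
  apply Rnot_lt_le; intro Hlt.
  set (gap := g's * d - (g s' - g s)).
  assert (Hgap : 0 < gap) by (unfold gap; lra).
  assert (Hdp : 0 < Rabs d) by (apply Rabs_pos_lt; auto).
  destruct (Hd (gap / (2 * Rabs d))) as [delta Hdel].
  { apply Rmult_lt_0_compat; [lra| apply Rinv_0_lt_compat; lra]. }
  pose proof (cond_pos delta) as Hdelta.
  set (l := Rmin 1 (delta / (2 * Rabs d))).
  assert (Hl0 : 0 < l). { unfold l; apply Rmin_glb_lt; [lra|].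
    apply Rmult_lt_0_compat; [lra| apply Rinv_0_lt_compat; lra]. }
  assert (Hl1 : l <= 1) by (unfold l; apply Rmin_l).
  assert (Hl2 : l * Rabs d <= delta / 2).
  { assert (l <= delta / (2 * Rabs d)) by (unfold l; apply Rmin_r).
    apply Rmult_le_compat_r with (r := Rabs d) in H; [|lra].
    replace (delta / (2 * Rabs d) * Rabs d) with (delta / 2) in H by (field; lra). lra. }
  set (h := l * d).
  assert (Hh0 : h <> 0) by (unfold h; apply Rmult_integral_contrapositive; split; lra).
  assert (Hhd : Rabs h < delta) by (unfold h; rewrite Rabs_mult, (Rabs_right l) by lra; lra).
  specialize (Hdel h Hh0 Hhd).
  set (Q := (g (s + h) - g s) / h) in Hdel.
  assert (EQ : g (s + h) - g s = Q * h) by (unfold Q; field; auto).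
  pose proof (Hc s' s l (conj (Rlt_le _ _ Hl0) Hl1)) as Hcv.
  replace (l * s' + (1 - l) * s) with (s + h) in Hcv by (unfold h, d; ring).
  assert (Q * l * d <= l * (g s' - g s)) by (replace (Q * l * d) with (Q * h) by (unfold h; ring); lra).
  assert (Q * d <= g s' - g s).
  { apply Rmult_le_reg_l with l; [lra|]. nra. }
  assert (Rabs ((Q - g's) * d) <= gap / (2 * Rabs d) * Rabs d).
  { rewrite Rabs_mult. apply Rmult_le_compat_r; lra. }
  replace (gap / (2 * Rabs d) * Rabs d) with (gap / 2) in H1 by (field; lra).
  pose proof (Rle_abs (- ((Q - g's) * d))). rewrite Rabs_Ropp in H2.
  unfold gap in *. lra.
Qed.

Lemma hinner_0l (Hs : Hilbert) (v : Hs) : hinner hzero v = 0.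
Proof. pose proof (hinner_addl Hs hzero hzero v) as E. rewrite hadd_0 in E. lra. Qed.

Lemma hinner_oppl (Hs : Hilbert) (v z : Hs) : hinner (hopp v) z = - hinner v z.
Proof. pose proof (hinner_addl Hs (hopp v) v z) as E. rewrite hadd_opp, hinner_0l in E. lra. Qed.

Lemma hinner_subl (Hs : Hilbert) (u v z : Hs) : hinner (hsub u v) z = hinner u z - hinner v z.
Proof. unfold hsub. rewrite hinner_addl, hinner_oppl. ring. Qed.

Lemma hinner_subr (Hs : Hilbert) (u v z : Hs) : hinner z (hsub u v) = hinner z u - hinner z v.
Proof. rewrite hinner_sym, hinner_subl, (hinner_sym _ u), (hinner_sym _ v). ring. Qed.

Lemma hinner_scalr (Hs : Hilbert) a (u z : Hs) : hinner z (hscal a u) = a * hinner z u.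
Proof. rewrite hinner_sym, hinner_scall, hinner_sym. ring. Qed.

Lemma hinner_0r (Hs : Hilbert) (v : Hs) : hinner v hzero = 0.
Proof. rewrite hinner_sym; apply hinner_0l. Qed.

Lemma step_id (Hs : Hilbert) (F h Kv : Hs) c :
  nsq (hsub (hsub F (hscal c Kv)) h) =
  nsq (hsub F h) - 2 * c * (hinner F Kv - hinner h Kv) + c ^ 2 * hinner Kv Kv.
Proof.
  unfold nsq. rewrite ?hinner_subl, ?hinner_subr, ?hinner_scall, ?hinner_scalr, ?hinner_subl, ?hinner_subr, ?hinner_scall, ?hinner_scalr.
  rewrite (hinner_sym _ Kv F), (hinner_sym _ h F), (hinner_sym _ Kv h). ring.
Qed.

Lemma nsq_sub0 (Hs : Hilbert) (F : Hs) : nsq (hsub F hzero) = nsq F.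
Proof. unfold nsq. rewrite !hinner_subl, !hinner_subr, !hinner_0l, !hinner_0r. ring. Qed.

Lemma nsq_0sub (Hs : Hilbert) (F : Hs) : nsq (hsub hzero F) = nsq F.
Proof. unfold nsq. rewrite !hinner_subl, !hinner_subr, !hinner_0l, !hinner_0r. ring. Qed.

Lemma nsq_nonneg (Hs : Hilbert) (F : Hs) : 0 <= nsq F.
Proof. apply hinner_pos. Qed.

Lemma step_ineq (Hs : Hilbert) (F h Kv : Hs) (g : R -> R) gF eta kap2 A B :
  (forall s, 0 <= g s) -> derivable_pt_lim g (hinner F Kv) gF ->
  (forall u v l, 0 <= l <= 1 -> g (l * u + (1 - l) * v) <= l * g u + (1 - l) * g v) ->
  gF ^ 2 <= A * g (hinner F Kv) + B -> hinner Kv Kv <= kap2 ->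
  A * kap2 * eta <= 1 -> 0 < eta -> 0 < A -> 0 <= B ->
  nsq (hsub (hsub F (hscal (eta * gF) Kv)) h) <=
  nsq (hsub F h) + eta ^ 2 * kap2 * B + 2 * eta * g (hinner h Kv) - eta * g (hinner F Kv).
Proof.
  intros gnn gd gc gb hk hs he hA hB. rewrite step_id.
  pose proof (conv_grad g gF (hinner F Kv) (hinner h Kv) gd gc) as Hcg.
  pose proof (hinner_pos Hs Kv) as HKK.
  set (Fx := hinner F Kv) in *. set (hx := hinner h Kv) in *.
  set (KK := hinner Kv Kv) in *. pose proof (gnn Fx).
  assert (T1 : - 2 * (eta * gF) * (Fx - hx) <= 2 * eta * (g hx - g Fx)) by nra.
  assert (T2 : (eta * gF) ^ 2 * KK <= eta ^ 2 * (gF ^ 2 * kap2)).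
  { replace ((eta * gF) ^ 2 * KK) with (eta ^ 2 * (gF ^ 2 * KK)) by ring.
    apply Rmult_le_compat_l; [nra|]. apply Rmult_le_compat_l; nra. }
  assert (T3 : eta ^ 2 * (gF ^ 2 * kap2) <= eta ^ 2 * ((A * g Fx + B) * kap2)).
  { apply Rmult_le_compat_l; [nra|]. apply Rmult_le_compat_r; lra. }
  assert (T4 : eta ^ 2 * (A * g Fx * kap2) <= eta * g Fx).
  { replace (eta ^ 2 * (A * g Fx * kap2)) with ((A * kap2 * eta) * (eta * g Fx)) by ring.
    assert (0 <= eta * g Fx) by nra. nra. }
  nra.
Qed.

Lemma sum1_eta0 a t : sum1 (eta0 a) t = sum1 a t.
Proof. induction t; simpl; [reflexivity| rewrite IHt; reflexivity]. Qed.

Lemma sum1_S a t : sum1 a (S t) = sum1 a t + a (S t).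
Proof. reflexivity. Qed.

Theorem lemma8
  (d : nat) (Xs : (nat -> R) -> Prop) (Ys : R -> Prop)
  (H : Hilbert) (K : (nat -> R) -> (nat -> R) -> R) (Kx : (nat -> R) -> H)
  (HK : forall x x', Xs x -> Xs x' -> K x x' = hinner (Kx x) (Kx x'))
  (Hrkhs : forall f : H, (forall x, Xs x -> hinner f (Kx x) = 0) -> f = hzero)
  (Kcont : forall x x', Xs x -> Xs x' -> forall eps, 0 < eps -> exists delta, 0 < delta /\
       forall u u', Xs u -> Xs u' -> dist_d d u x < delta -> dist_d d u' x' < delta ->
         Rabs (K u u' - K x x') < eps)
  (kappa : R) (Hkappa : is_lub (fun r => exists x, Xs x /\ r = sqrt (K x x)) kappa)
  (phi dphi : R -> R -> R)
  (phi_nonneg : forall y s, Ys y -> 0 <= phi y s)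
  (phi_deriv : forall y s, Ys y -> derivable_pt_lim (phi y) s (dphi y s))
  (phi_convex : forall y s s' l, Ys y -> 0 <= l <= 1 ->
       phi y (l * s + (1 - l) * s') <= l * phi y s + (1 - l) * phi y s')
  (alpha L : R) (Halpha : 0 < alpha <= 1) (HL : 0 < L)
  (phi_holder : forall y s s', Ys y ->
       Rabs (dphi y s - dphi y s') <= L * hpow (Rabs (s - s')) alpha)
  (fH : H)
  (S0 S1 : R)
  (HS0 : is_lub (fun r => exists y, Ys y /\ r = phi y 0) S0)
  (HS1 : is_lub (fun r => exists x y, Xs x /\ Ys y /\ r = phi y (hinner fH (Kx x))) S1)
  (xs : nat -> (nat -> R)) (ys : nat -> R)
  (Hxs : forall t, (1 <= t)%nat -> Xs (xs t)) (Hys : forall t, (1 <= t)%nat -> Ys (ys t))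
  (eta : nat -> R) (eta_pos : forall t, (1 <= t)%nat -> 0 < eta t)
  (eta_small : forall t, (1 <= t)%nat -> constA alpha L * kappa ^ 2 * eta t <= 1) :
  let f := ogd Kx dphi eta xs ys in
  let C1 := nsq fH + constB alpha L / constA alpha L + 2 * Rmax S0 S1 in
  let C2 := 2 * S1 + eta 1%nat * kappa ^ 2 * constB alpha L in
  (forall t, (1 <= t)%nat ->
     nsq (hsub (f (S t)) fH) <= C1 * sum0 (eta0 eta) t /\
     nsq (f (S t)) <= C1 * sum1 eta t) /\
  ((forall t, (1 <= t)%nat -> eta (S t) <= eta t) ->
   forall t, (1 <= t)%nat ->
     sum1 (fun k => eta k ^ 2 * phi (ys k) (hinner (f k) (Kx (xs k)))) t
       <= eta 1%nat * nsq fH + C2 * sum1 (fun k => eta k ^ 2) t).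
Proof.
  intros f C1 C2.
  pose proof (constA_pos alpha L (proj1 Halpha)) as HA.
  pose proof (constB_nonneg alpha L Halpha) as HB.
  set (A := constA alpha L) in *. set (B := constB alpha L) in *.
  assert (Hk : forall x, Xs x -> hinner (Kx x) (Kx x) <= kappa ^ 2).
  { intros x Hx. destruct Hkappa as [Hub _].
    assert (Hs : sqrt (K x x) <= kappa) by (apply Hub; exists x; auto).
    rewrite <- HK by auto. pose proof (hinner_pos H (Kx x)). rewrite <- HK in H0 by auto.
    pose proof (sqrt_pos (K x x)). rewrite <- (sqrt_sqrt (K x x)) by auto. nra. }
  assert (HS1b : forall x y, Xs x -> Ys y -> phi y (hinner fH (Kx x)) <= S1).
  { intros x y Hx Hy. destruct HS1 as [Hub _]. apply Hub. exists x, y; auto. }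
  assert (HS0b : forall y, Ys y -> phi y 0 <= S0).
  { intros y Hy. destruct HS0 as [Hub _]. apply Hub. exists y; auto. }
  assert (Hx1 := Hxs 1%nat (le_n 1)). assert (Hy1 := Hys 1%nat (le_n 1)).
  assert (S1p : 0 <= S1) by (pose proof (HS1b _ _ Hx1 Hy1); pose proof (phi_nonneg (ys 1%nat) (hinner fH (Kx (xs 1%nat))) Hy1); lra).
  assert (S0p : 0 <= S0) by (pose proof (HS0b _ Hy1); pose proof (phi_nonneg (ys 1%nat) 0 Hy1); lra).
  assert (Hgb : forall y s, Ys y -> dphi y s ^ 2 <= A * phi y s + B).
  { intros y s Hy. apply (selfbound (phi y) (dphi y) alpha L Halpha HL).
    - intros; apply phi_nonneg; auto.
    - intros; apply phi_deriv; auto.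
    - intros; apply phi_holder; auto. }
  assert (Hstep : forall t (h : H),
    nsq (hsub (ogd_aux Kx dphi eta xs ys (S t)) h) <=
    nsq (hsub (ogd_aux Kx dphi eta xs ys t) h) + eta (S t) ^ 2 * kappa ^ 2 * B
    + 2 * eta (S t) * phi (ys (S t)) (hinner h (Kx (xs (S t))))
    - eta (S t) * phi (ys (S t)) (hinner (ogd_aux Kx dphi eta xs ys t) (Kx (xs (S t))))).
  { intros t h. assert (H1t : (1 <= S t)%nat) by lia.
    simpl ogd_aux at 1.
    apply step_ineq with (A := A).
    - intros; apply phi_nonneg; auto.
    - apply phi_deriv; auto.
    - intros; apply phi_convex; auto.
    - apply Hgb; auto.
    - apply Hk; auto.
    - apply eta_small; auto.
    - apply eta_pos; auto.
    - auto.
    - auto. }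
  assert (Hinc : forall t, eta (S t) ^ 2 * kappa ^ 2 * B <= eta (S t) * (B / A)).
  { intros t. pose proof (eta_small (S t) ltac:(lia)). pose proof (eta_pos (S t) ltac:(lia)).
    fold A in H0.
    assert (eta (S t) * (B / A) - eta (S t) ^ 2 * kappa ^ 2 * B
            = eta (S t) * B * (1 - A * kappa ^ 2 * eta (S t)) / A) by (field; lra).
    assert (0 <= eta (S t) * B * (1 - A * kappa ^ 2 * eta (S t)) / A).
    { apply Rmult_le_pos; [|left; apply Rinv_0_lt_compat; lra].
      apply Rmult_le_pos; nra. }
    lra. }
  assert (Hsum_nn : forall t, 0 <= sum1 eta t).
  { induction t; simpl; [lra|]. pose proof (eta_pos (S t) ltac:(lia)). lra. }
  assert (P1 : forall t, nsq (hsub (ogd_aux Kx dphi eta xs ys t) fH) <= nsq fH + (B / A + 2 * S1) * sum1 eta t).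
  { induction t.
    - simpl. rewrite nsq_0sub. lra.
    - pose proof (Hstep t fH). pose proof (Hinc t).
      pose proof (HS1b (xs (S t)) (ys (S t)) (Hxs (S t) ltac:(lia)) (Hys (S t) ltac:(lia))).
      pose proof (phi_nonneg (ys (S t)) (hinner (ogd_aux Kx dphi eta xs ys t) (Kx (xs (S t)))) (Hys (S t) ltac:(lia))).
      pose proof (eta_pos (S t) ltac:(lia)).
      simpl sum1. nra. }
  assert (P2 : forall t, nsq (ogd_aux Kx dphi eta xs ys t) <= (B / A + 2 * S0) * sum1 eta t).
  { induction t.
    - simpl. unfold nsq. rewrite hinner_0l. lra.
    - pose proof (Hstep t hzero). rewrite !nsq_sub0, hinner_0l in H0. pose proof (Hinc t).
      pose proof (HS0b (ys (S t)) (Hys (S t) ltac:(lia))).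
      pose proof (phi_nonneg (ys (S t)) (hinner (ogd_aux Kx dphi eta xs ys t) (Kx (xs (S t)))) (Hys (S t) ltac:(lia))).
      pose proof (eta_pos (S t) ltac:(lia)).
      simpl sum1. nra. }
  assert (BA : 0 <= B / A) by (apply Rmult_le_pos; [lra| left; apply Rinv_0_lt_compat; lra]).
  pose proof (nsq_nonneg H fH) as NfH.
  pose proof (Rmax_l S0 S1). pose proof (Rmax_r S0 S1).
  split.
  - intros t Ht. unfold f. change (ogd Kx dphi eta xs ys (S t)) with (ogd_aux Kx dphi eta xs ys t).
    split.
    + pose proof (P1 t). pose proof (Hsum_nn t). unfold sum0. rewrite sum1_eta0.
      replace (eta0 eta 0) with 1 by reflexivity.
      unfold C1; fold A B.
      assert ((B / A + 2 * S1) * sum1 eta t <= (nsq fH + B / A + 2 * Rmax S0 S1) * sum1 eta t)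
        by (apply Rmult_le_compat_r; lra).
      nra.
    + pose proof (P2 t). pose proof (Hsum_nn t). unfold C1; fold A B.
      assert ((B / A + 2 * S0) * sum1 eta t <= (nsq fH + B / A + 2 * Rmax S0 S1) * sum1 eta t)
        by (apply Rmult_le_compat_r; lra).
      lra.
  - intros Hdec t Ht.
    assert (Hle1 : forall k, (1 <= k)%nat -> eta k <= eta 1%nat).
    { intros k Hk1. induction Hk1; [lra|]. pose proof (Hdec m ltac:(lia)). lra. }
    set (D := fun t => nsq (hsub (ogd_aux Kx dphi eta xs ys t) fH)).
    assert (Inv : forall t, sum1 (fun k => eta k ^ 2 * phi (ys k) (hinner (f k) (Kx (xs k)))) t
       + eta (S t) * D t <= eta 1%nat * nsq fH + C2 * sum1 (fun k => eta k ^ 2) t).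
    { induction t0.
      - simpl. unfold D. simpl. rewrite nsq_0sub. lra.
      - rewrite !sum1_S. cbv beta. change (f (S t0)) with (ogd_aux Kx dphi eta xs ys t0).
        pose proof (Hstep t0 fH) as St. fold (D (S t0)) (D t0) in St.
        pose proof (Hinc t0).
        pose proof (HS1b (xs (S t0)) (ys (S t0)) (Hxs (S t0) ltac:(lia)) (Hys (S t0) ltac:(lia))).
        set (ph := phi (ys (S t0)) (hinner (ogd_aux Kx dphi eta xs ys t0) (Kx (xs (S t0))))) in *.
        set (e := eta (S t0)) in *.
        pose proof (eta_pos (S t0) ltac:(lia)). fold e in H4.
        pose proof (Hdec (S t0) ltac:(lia)). fold e in H5.
        pose proof (Hle1 (S t0) ltac:(lia)). fold e in H6.
        assert (0 <= D (S t0)) by apply nsq_nonneg.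
        assert (He3 : e * (e ^ 2 * kappa ^ 2 * B) <= e ^ 2 * (eta 1%nat * kappa ^ 2 * B)).
        { replace (e * (e ^ 2 * kappa ^ 2 * B)) with (e * (e ^ 2 * kappa ^ 2 * B)) by ring.
          pose proof (pow2_ge_0 kappa). 
          assert (0 <= e ^ 2 * kappa ^ 2 * B) by (apply Rmult_le_pos; [apply Rmult_le_pos|]; nra).
          replace (e ^ 2 * (eta 1%nat * kappa ^ 2 * B)) with (eta 1%nat * (e ^ 2 * kappa ^ 2 * B)) by ring.
          apply Rmult_le_compat_r; lra. }
        assert (Hm : e * (e * ph) <= e * (D t0 - D (S t0) + e ^ 2 * kappa ^ 2 * B + 2 * e * S1)).
        { assert (2 * e * phi (ys (S t0)) (hinner fH (Kx (xs (S t0)))) <= 2 * e * S1)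
            by (apply Rmult_le_compat_l; lra).
          apply Rmult_le_compat_l; lra. }
        assert (Hd2 : eta (S (S t0)) * D (S t0) <= e * D (S t0)) by (apply Rmult_le_compat_r; lra).
        unfold C2. fold B.
        set (P := sum1 (fun k : nat => eta k ^ 2 * phi (ys k) (hinner (f k) (Kx (xs k)))) t0) in *.
        set (Sg := sum1 (fun k : nat => eta k ^ 2) t0) in *.
        unfold C2 in IHt0. fold B in IHt0.
        assert (Ex : (2 * S1 + eta 1%nat * kappa ^ 2 * B) * (Sg + e ^ 2)
           = (2 * S1 + eta 1%nat * kappa ^ 2 * B) * Sg + 2 * S1 * e ^ 2 + e ^ 2 * (eta 1%nat * kappa ^ 2 * B)) by ring.
        assert (Ex2 : e * (D t0 - D (S t0) + e ^ 2 * kappa ^ 2 * B + 2 * e * S1)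
           = e * D t0 - e * D (S t0) + e * (e ^ 2 * kappa ^ 2 * B) + 2 * S1 * e ^ 2) by ring.
        assert (Ex3 : e * (e * ph) = e ^ 2 * ph) by ring.
        rewrite Ex. rewrite Ex2, Ex3 in Hm. lra. }
    pose proof (Inv t). pose proof (eta_pos (S t) ltac:(lia)).
    assert (0 <= eta (S t) * D t) by (apply Rmult_le_pos; [lra| apply nsq_nonneg]).
    lra.
Qed.
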